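(* Let $T$ be a tree. If $F$ is a minimal fort of $T$, then $F$ does not contain three distinct vertices $a, b, c$ with $a \sim b$ and $b \sim c$.
   Context: $u \sim v$ means $u$ and $v$ are adjacent. A fort of a graph $G$ is a nonempty set $F\subseteq V(G)$ such that every vertex outside $F$ is adjacent to either zero or at least two vertices of $F$; it is minimal if no proper subset is a fort. *)

(* Defs.v *)
From mathcomp Require Import all_boot.
Set Implicit Arguments. Unset Strict Implicit. Unset Printing Implicit Defensive.

Definition simple_graph (V : finType) (e : rel V) : Prop :=
  symmetric e /\ irreflexive e.

Definition connected_graph (V : finType) (e : rel V) : Prop :=
  forall x y : V, connect e x y.

Definition is_cycle (V : finType) (e : rel V) (c : seq V) : Prop :=
  3 <= size c /\ uniq c /\ cycle e c.

Definition acyclic (V : finType) (e : rel V) : Prop :=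
  forall c : seq V, ~ is_cycle e c.

Definition tree (V : finType) (e : rel V) : Prop :=
  simple_graph e /\ connected_graph e /\ acyclic e.

Definition nbrs_in (V : finType) (e : rel V) (F : {set V}) (v : V) : nat :=
  #|[set u in F | e v u]|.

Definition fort (V : finType) (e : rel V) (F : {set V}) : Prop :=
  F != set0 /\
  forall v : V, v \notin F -> nbrs_in e F v = 0 \/ 2 <= nbrs_in e F v.

Definition minimal_fort (V : finType) (e : rel V) (F : {set V}) : Prop :=
  fort e F /\ forall F' : {set V}, F' \proper F -> ~ fort e F'.

(* Main.v *)
Require Import Defs.
From mathcomp Require Import all_boot.

Lemma path_avoid (V : finType) (e : rel V) (b x : V) (p : seq V) :
  path [rel x y | [&& e x y, x != b & y != b]] x p -> b \notin p.
Proof.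
elim: p x => [|y p IH] x //= /andP[/and3P[_ _ yb] /IH hp].
by rewrite in_cons negb_or eq_sym yb hp.
Qed.

Arguments path_avoid {V e b x p}.

Theorem mainTheorem5 (V : finType) (e : rel V) (F : {set V}) :
  tree e -> minimal_fort e F ->
  ~ (exists a b c : V,
       [/\ a \in F, b \in F, c \in F,
           [/\ a != b, b != c & a != c] &
           e a b /\ e b c]).
Proof.
move=> [[esym eirr] [_ acyc]] [[Fne Ffort] Fmin] [a [b [c [aF bF cF [ab bc ac] [eab ebc]]]]].
set e' := [rel x y | [&& e x y, x != b & y != b]].
set D := [set x | [exists u, [&& u \in F, e b u & connect e' u x]]].
have ne_b : forall u, e b u -> u != b.
  by move=> u ebu; apply/eqP=> ub; move: ebu; rewrite ub eirr.
have bD : b \notin D.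
  apply/negP; rewrite inE => /existsP[u /and3P[_ ebu /connectP[p hp lp]]].
  have := path_avoid hp; case: p hp lp => [|y p] hp lp /=.
    by move: (ne_b _ ebu); rewrite /= in lp; rewrite -lp eqxx.
  by move=> /negP; apply; rewrite lp (mem_last y p).
have Dext : forall x y, x \in D -> e x y -> y != b -> y \in D.
  move=> x y; rewrite !inE => /existsP[u /and3P[uF ebu cux]] exy yb.
  have xnb : x != b.
    apply/negP=> /eqP xb.
    by move: bD; rewrite -xb inE => /negP; apply; apply/existsP; exists u; rewrite uF ebu cux.
  apply/existsP; exists u; rewrite uF ebu /=.
  by apply: connect_trans cux (connect1 _); rewrite /= exy yb xnb.
have uD : forall u, u \in F -> e b u -> u \in D.
  by move=> u uF ebu; rewrite inE; apply/existsP; exists u; rewrite uF ebu connect0.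
have noback : forall v, v \in D -> v \notin F -> ~~ e v b.
  move=> v; rewrite inE => /existsP[u /and3P[uF ebu /connectP[p hp lp]]] vF.
  apply/negP=> evb.
  case: (shortenP hp) lp => p' hp' up' _ lp.
  apply: (acyc (b :: u :: p')); split; last split.
  - case: p' hp' up' lp => [|y p'] //= _ _ lp.
    by move: vF; rewrite lp uF.
  - rewrite cons_uniq up' andbT.
    rewrite in_cons negb_or eq_sym ne_b //=.
    exact: path_avoid hp'.
  - rewrite /= ebu /= rcons_path -lp evb andbT.
    by apply: sub_path hp' => x y /and3P[].
set F' := F :&: D.
apply: (Fmin F').
  rewrite properE subsetIl /=; apply/negP => /subsetP/(_ b bF).
  by rewrite inE (negbTE bD) andbF.
split.
  apply/set0Pn; exists a; rewrite inE aF uD // esym //.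
move=> v; rewrite inE negb_and => hv.
case: (eqVneq v b) => [->|vb].
  right; rewrite /nbrs_in.
  have <- : #|[set a; c]| = 2 by rewrite cards2 ac.
  apply: subset_leq_card; apply/subsetP => x; rewrite in_set2 => /orP[] /eqP->.
    by rewrite inE in_setI aF uD // esym.
  by rewrite inE in_setI cF uD.
case vD: (v \in D).
  have vF : v \notin F by move: hv; rewrite vD orbF.
  have -> : nbrs_in e F' v = nbrs_in e F v.
    rewrite /nbrs_in; apply: eq_card => w; rewrite [w \in [set _ in F' | _]]inE [w \in [set _ in F | _]]inE in_setI.
    case wF: (w \in F) => //=; case evw: (e v w); rewrite ?andbT ?andbF //.
    apply: Dext (vD) (evw) _; apply/eqP => wb; move: (noback v vD vF).
    by rewrite -wb evw.
  exact: Ffort.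
left; rewrite /nbrs_in; apply/eqP; rewrite cards_eq0; apply/eqP/setP => w.
rewrite inE in_setI in_set0; apply/negP => /andP[/andP[_ wD] evw].
by move: vD; rewrite (Dext w v wD) // esym.
Qed.
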